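(* Let $q$ be a prime power, $c\in\mathbb{F}_q^*$ and $\delta\in\mathbb{F}_{q^4}$. Then $f(x)=g(x^q+x+\delta)+cx$ is a permutation polynomial of $\mathbb{F}_{q^4}$ if one of the following holds: (i) $g(x)=c_0\left(u(x)^{q^3}+u(x)^{q^2}+u(x)^q+u(x)\right)$, where $u(x)\in\mathbb{F}_{q^4}[x]$ and $c_0\in\mathbb{F}_{q^4}^*$ satisfies $c_0^q+c_0=0$; (ii) $g(x)=c_0x^{i(q^3+q^2+q+1)}$, where $i$ is a positive integer and $c_0\in\mathbb{F}_{q^4}^*$ satisfies $c_0^q+c_0=0$.
   Context: A polynomial is a permutation polynomial of a finite field if it induces a bijection of that field. $\mathbb{F}_q$ is viewed as the subfield of $\mathbb{F}_{q^4}$. *)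

(* Defs.v *)
From HB Require Import structures.
From mathcomp Require Import all_boot all_order all_algebra all_field.
Set Implicit Arguments. Unset Strict Implicit. Unset Printing Implicit Defensive.
Import GRing.Theory.
Local Open Scope ring_scope.

Definition prime_power (q : nat) : Prop :=
  exists p k : nat, [/\ prime p, (0 < k)%N & q = (p ^ k)%N].

Definition is_perm_poly (L : finFieldType) (P : {poly L}) : Prop :=
  bijective (fun x : L => P.[x]).

(* Main.v *)
Require Import Defs.
From HB Require Import structures.
From mathcomp Require Import all_boot all_order all_algebra all_field.
From mathcomp Require Import ring zify.
Import GRing.Theory.
Local Open Scope ring_scope.

Theorem proposition6 (q : nat) (L : finFieldType) (c delta : L) (g : {poly L}) :
  prime_power q ->
  #|L| = (q ^ 4)%N ->
  (* c lies in the subfield F_q = {x | x^q = x} and is nonzero *)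
  c ^+ q = c -> c != 0 ->
  ((exists (u : {poly L}) (c0 : L),
      [/\ c0 != 0, c0 ^+ q + c0 = 0 &
          g = c0 *: (u ^+ (q ^ 3) + u ^+ (q ^ 2) + u ^+ q + u)])
   \/
   (exists (i : nat) (c0 : L),
      [/\ (0 < i)%N, c0 != 0, c0 ^+ q + c0 = 0 &
          g = c0 *: 'X ^+ (i * (q ^ 3 + q ^ 2 + q + 1))])) ->
  is_perm_poly (g \Po ('X ^+ q + 'X + delta%:P) + c *: 'X).
Proof.
move=> [p [k [pp k0 ->]]] cardL cq c0n Hg.
have pch : p \in [pchar L].
  by apply: (@card_finPcharP L p (k * 4)) => //; rewrite cardL expnM.
have qn : [pchar L].-nat (p ^ k)%N by rewrite pnatX (pnatE _ pp) pch.
set Q := (p ^ k)%N in qn cq Hg cardL *.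
have fD (x y : L) : (x + y) ^+ Q = x ^+ Q + y ^+ Q by rewrite exprDn_pchar.

have fN (x : L) : (- x) ^+ Q = - x ^+ Q by rewrite exprNn_pchar.
have fB (x y : L) : (x - y) ^+ Q = x ^+ Q - y ^+ Q by rewrite fD fN.
have f4 (x : L) : x ^+ (Q ^ 4) = x by rewrite -cardL expf_card.
have [c0 [h [c0q hq gE]]] : exists c0 (h : L -> L),
    [/\ c0 ^+ Q + c0 = 0, forall y, h y ^+ Q = h y & forall y, g.[y] = c0 * h y].
  case: Hg => [[u [c0 [_ c0q ->]]] | [i [c0 [_ _ c0q ->]]]].
    exists c0, (fun y => let z := u.[y] in z ^+ (Q ^ 3) + z ^+ (Q ^ 2) + z ^+ Q + z).
    split => // [y|y]; last by rewrite hornerZ !hornerD !horner_exp.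
    set z := u.[y]; rewrite !fD -!exprM -!expnSr f4.
    rewrite /= -mulnn; ring.
  exists c0, (fun y => y ^+ (i * (Q ^ 3 + Q ^ 2 + Q + 1))).
  split => // [y|y]; last by rewrite hornerZ horner_exp hornerX.
  rewrite -exprM.
  have -> : (i * (Q ^ 3 + Q ^ 2 + Q + 1) * Q = Q ^ 4 * i + i * (Q ^ 3 + Q ^ 2 + Q))%N.
    rewrite !expnS !expn0 !muln1; nia.
  have -> : (i * (Q ^ 3 + Q ^ 2 + Q + 1) = i + i * (Q ^ 3 + Q ^ 2 + Q))%N.
    by rewrite mulnDr muln1 addnC.
  by rewrite !exprD exprM f4.
apply: injF_bij => x z.
rewrite !hornerE !horner_comp !hornerE /= !gE => E.
set Px := x ^+ Q + x + delta; set Pz := z ^+ Q + z + delta.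
set s := (h Pz - h Px) / c.
have sq : s ^+ Q = s by rewrite /s exprMn exprVn fB !hq cq.
have xz : x - z = c0 * s.
  rewrite /s mulrA; apply: (mulIf c0n); rewrite divfK //.
  have -> : (x - z) * c = (c0 * h Px + c * x) - c0 * h Px - c * z by ring.
  rewrite E; ring.
have PE : Px = Pz.
  have : (x - z) ^+ Q + (x - z) = 0 by rewrite xz exprMn sq -mulrDl c0q mul0r.
  rewrite fB /Px /Pz => H; apply/eqP; rewrite -subr_eq0; apply/eqP; rewrite -H; ring.
move: E; rewrite -/Px -/Pz PE => /addrI; exact: mulfI.
Qed.
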